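(* Let $\mathcal{V}$ be a finite set of nodes, $\mathcal{P}$ a finite set of labels with $|\mathcal{P}|\ge 2$, and $\mathcal{E}$ a set of unordered pairs $\{i,j\}\subseteq\mathcal{V}$. Let $\theta_{ip}\in\mathbb{R}$ for $i\in\mathcal{V},p\in\mathcal{P}$, and let the pairwise potentials be associative: $\theta_{ij}(p,q)=-C_{ij,p}[p=q]$ with $C_{ij,p}\ge 0$. For $\vec{y}\in\{0,1\}^{\mathcal{V}\times\mathcal{P}}$ and $\vec{\lambda}\in\mathbb{R}^{\mathcal{V}}$ define $$L(\vec{y},\vec{\lambda})=\sum_{i\in\mathcal{V}}\sum_{p\in\mathcal{P}}\theta_{ip}y_{ip}-\sum_{\{i,j\}\in\mathcal{E}}\sum_{p\in\mathcal{P}}C_{ij,p}\,y_{ip}y_{jp}+\sum_{i\in\mathcal{V}}\lambda_i\Big(\sum_{p\in\mathcal{P}}y_{ip}-1\Big),$$ and $D(\vec{\lambda})=\min_{\vec{y}\in\{0,1\}^{\mathcal{V}\times\mathcal{P}}}L(\vec{y},\vec{\lambda})$. Fix $\vec{\lambda}^{old}\in\mathbb{R}^{\mathcal{V}}$ and a node $j\in\mathcal{V}$. For $p\in\mathcal{P}$ and $k\in\{0,1\}$ let $MM_{jp,k}=\min\{L(\vec{y},\vec{\lambda}^{old}):\vec{y}\in\{0,1\}^{\mathcal{V}\times\mathcal{P}},\ y_{jp}=k\}$ and $\delta^j_p=MM_{jp,0}-MM_{jp,1}$. Let $p^{(1)}_j\in\arg\max_{p\in\mathcal{P}}\delta^j_p$,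 $\delta^j_{(1)}=\delta^j_{p^{(1)}_j}$, and $\delta^j_{(2)}=\max_{p\in\mathcal{P}\setminus\{p^{(1)}_j\}}\delta^j_p$. Let $\Delta_j$ be any number in $[\delta^j_{(2)},\delta^j_{(1)}]$ and define $\vec{\lambda}^{new}$ by $\lambda^{new}_j=\lambda^{old}_j+\Delta_j$ and $\lambda^{new}_i=\lambda^{old}_i$ for $i\ne j$. Then $\vec{\lambda}^{new}$ maximizes $D$ with respect to the coordinate $\lambda_j$: $D(\vec{\lambda}^{new})\ge D(\vec{\lambda})$ for every $\vec{\lambda}\in\mathbb{R}^{\mathcal{V}}$ with $\lambda_i=\lambda^{old}_i$ for all $i\ne j$.
   Context: This is the setting of minimizing a pairwise energy $E(\vec x)=\sum_i\theta_i(x_i)+\sum_{\{i,j\}\in\mathcal{E}}\theta_{ij}(x_i,x_j)$ over labelings $\vec x\in\mathcal{P}^{\mathcal{V}}$, rewritten with indicator variables $y_{ip}=[x_i=p]$; $L$ is the Lagrangian obtained by relaxing the consistency constraints $\sum_p y_{ip}=1$ with multipliers $\lambda_i$, and $D$ is the corresponding Lagrangian dual function. *)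

(* Defs.v *)
From mathcomp Require Import all_boot all_order all_algebra.
Set Implicit Arguments. Unset Strict Implicit. Unset Printing Implicit Defensive.
Import Order.TTheory GRing.Theory Num.Theory.
Local Open Scope ring_scope.

Definition labeling (V P : finType) := {ffun V * P -> bool}.

(* Lagrangian L(y, lambda) with associative pairwise potentials
   theta_ij(p,q) = - C_{ij,p} [p = q]; edges are unordered pairs e = {i,j}
   (sets of cardinality 2), and the edge sum counts each unordered pair once:
   for e = {i,j}, y_ip y_jp = \prod_(v in e) y_vp. *)
Definition lagr (R : realFieldType) (V P : finType) (E : {set {set V}})
  (theta : V -> P -> R) (C : {set V} -> P -> R)
  (y : labeling V P) (lam : V -> R) : R :=
  \sum_(i : V) \sum_(p : P) theta i p * (y (i, p))%:R
  - \sum_(e in E) \sum_(p : P) C e p * \prod_(v in e) (y (v, p))%:R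
  + \sum_(i : V) lam i * (\sum_(p : P) (y (i, p))%:R - 1).

Definition minL (R : realFieldType) (V P : finType) (f : labeling V P -> R)
  (Q : pred (labeling V P)) (y0 : labeling V P) : R :=
  \big[Num.min/f y0]_(y | Q y) f y.

Definition y_zero (V P : finType) : labeling V P := [ffun _ => false].
Definition y_unit (V P : finType) (j : V) (p : P) : labeling V P :=
  [ffun x => x == (j, p)].

Definition dualD (R : realFieldType) (V P : finType) (E : {set {set V}})
  (theta : V -> P -> R) (C : {set V} -> P -> R) (lam : V -> R) : R :=
  minL (fun y => lagr E theta C y lam) predT (y_zero V P).

Definition minmarg (R : realFieldType) (V P : finType) (E : {set {set V}})
  (theta : V -> P -> R) (C : {set V} -> P -> R) (lam : V -> R)
  (j : V) (p : P) (k : bool) : R :=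
  minL (fun y => lagr E theta C y lam) (fun y => y (j, p) == k)
       (if k then y_unit j p else y_zero V P).

Definition delta (R : realFieldType) (V P : finType) (E : {set {set V}})
  (theta : V -> P -> R) (C : {set V} -> P -> R) (lam : V -> R)
  (j : V) (p : P) : R :=
  minmarg E theta C lam j p false - minmarg E theta C lam j p true.

(* Main.v *)
Require Import Defs.
From mathcomp Require Import all_boot all_order all_algebra ring lra.
Set Implicit Arguments. Unset Strict Implicit. Unset Printing Implicit Defensive.
Import Order.TTheory GRing.Theory Num.Theory.
Local Open Scope ring_scope.

Section H.
Variables (R : realFieldType) (V P : finType) (E : {set {set V}})
  (theta : V -> P -> R) (C : {set V} -> P -> R).

Definition G (lam : V -> R) (p : P) (y : labeling V P) : R :=
  \sum_(i : V) theta i p * (y (i,p))%:R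
  - \sum_(e in E) C e p * \prod_(v in e) (y (v, p))%:R
  + \sum_(i : V) lam i * (y (i,p))%:R.

Lemma G_ext lam p (y z : labeling V P) : (forall i, y (i,p) = z (i,p)) -> G lam p y = G lam p z.
Proof.
move=> H; rewrite /G; congr (_ - _ + _); apply: eq_bigr => i _; rewrite ?H //.
by congr (_ * _); apply: eq_bigr => v _; rewrite H.
Qed.

Lemma L_dec (y : labeling V P) lam : lagr E theta C y lam = \sum_p G lam p y - \sum_i lam i.
Proof.
rewrite /lagr /G.
rewrite [in RHS]big_split /= sumrB.
have e1 : \sum_p \sum_i theta i p * (y (i, p))%:R = \sum_i \sum_p theta i p * (y (i, p))%:R := exchange_big _ _ _ _ _ _.
have e2 : \sum_p \sum_(e in E) C e p * \prod_(v in e) (y (v, p))%:R = \sum_(e in E) \sum_p C e p * \prod_(v in e) (y (v, p))%:R.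
  by rewrite exchange_big.
have e3 : \sum_p \sum_i lam i * (y (i, p))%:R = \sum_i lam i * (\sum_p (y (i, p))%:R - 1) + \sum_i lam i.
  rewrite exchange_big /=.
  under [X in _ = X + _]eq_bigr => i _ do rewrite mulrBr mulr1 mulr_sumr.
  by rewrite sumrB subrK.
rewrite e1 e2 e3; ring.
Qed.

Lemma lagr_shift (y : labeling V P) (lam lam' : V -> R) j : (forall i, i != j -> lam i = lam' i) ->
  lagr E theta C y lam = lagr E theta C y lam' + (lam j - lam' j) * (\sum_p (y (j,p))%:R - 1).
Proof.
move=> H; rewrite /lagr.
pose X := fun i => \sum_p (y (i, p))%:R - 1 : R.
have -> : \sum_i lam i * X i = \sum_i lam' i * X i + (lam j - lam' j) * X j.
  rewrite (bigD1 j) //= [in RHS](bigD1 j) //=.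
  rewrite (eq_bigr (fun i => lam' i * X i)); last by move=> i /H ->.
  ring.
rewrite /X; ring.
Qed.

Definition mix (y : labeling V P) (A : pred P) (w : P -> labeling V P) : labeling V P :=
  [ffun x => if A x.2 then w x.2 x else y x].

Lemma mix_L (y : labeling V P) A w lam : lagr E theta C (mix y A w) lam =
  lagr E theta C y lam + \sum_(q | A q) (G lam q (w q) - G lam q y).
Proof.
rewrite !L_dec [\sum_(q | A q) _]big_mkcond /=.
rewrite (eq_bigr (fun p => G lam p y + (if A p then G lam p (w p) - G lam p y else 0))).
  by rewrite big_split /=; ring.
move=> p _; case: ifP => hA.
  rewrite addrC subrK; apply: G_ext => i; by rewrite ffunE /= hA.
by rewrite addr0; apply: G_ext => i; rewrite ffunE /= hA.
Qed.

Lemma minL_spec (f : labeling V P -> R) (Q : pred (labeling V P)) y0 : Q y0 ->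
  let z := Order.arg_min y0 Q f in
  [/\ Q z, minL f Q y0 = f z & forall y, Q y -> f z <= f y].
Proof.
move=> Q0 /=; case: arg_minP => // z Qz Hz; split => //.
apply: le_anti; rewrite /minL bigmin_le_cond //=.
by apply/bigmin_geP; split; [apply: Hz|].
Qed.

Lemma minL_le (f : labeling V P -> R) (Q : pred (labeling V P)) y0 y : Q y -> minL f Q y0 <= f y.
Proof. exact: bigmin_le_cond. Qed.
End H.

Unset Implicit Arguments.
Set Strict Implicit.

Theorem theorem1 (R : realFieldType) (V P : finType)
  (hP : (1 < #|P|)%N)
  (E : {set {set V}}) (hE : forall e, e \in E -> #|e| = 2%N)
  (theta : V -> P -> R) (C : {set V} -> P -> R)
  (hC : forall e p, e \in E -> 0 <= C e p)
  (lam_old : V -> R) (j : V)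
  (p1 : P)
  (hp1 : forall p, delta E theta C lam_old j p <= delta E theta C lam_old j p1)
  (Delta : R)
  (hD2 : forall q, q != p1 -> delta E theta C lam_old j q <= Delta)
  (hD1 : Delta <= delta E theta C lam_old j p1)
  (lam_new : V -> R)
  (hnew_j : lam_new j = lam_old j + Delta)
  (hnew_i : forall i, i != j -> lam_new i = lam_old i) :
  forall lam : V -> R, (forall i, i != j -> lam i = lam_old i) ->
    dualD E theta C lam <= dualD E theta C lam_new.
Proof.
move=> lam Hlam.
pose Lo := fun y : labeling V P => lagr E theta C y lam_old.
pose s := fun y : labeling V P => \sum_p ((y (j,p))%:R : R).
pose G0 := G E theta C lam_old.
pose y0 := fun (p : P) (k : bool) => if k then y_unit j p else y_zero V P.
have Qy0 : forall p k, (y0 p k) (j,p) == k.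
  by move=> p [|]; rewrite /y0 /y_unit /y_zero ffunE ?eqxx.
pose z := fun p k => Order.arg_min (y0 p k) (fun y : labeling V P => y (j,p) == k) Lo.
have zspec : forall p k, [/\ z p k (j,p) = k, minmarg E theta C lam_old j p k = Lo (z p k)
     & forall y : labeling V P, y (j,p) = k -> Lo (z p k) <= Lo y].
  move=> p k; have [h1 h2 h3] := @minL_spec R V P Lo (fun y : labeling V P => y (j,p) == k) (y0 p k) (Qy0 p k).
  split; first exact/eqP.
    by rewrite /minmarg -h2.
  by move=> y hy; apply: h3; apply/eqP.
have delta_eq : forall p, delta E theta C lam_old j p = Lo (z p false) - Lo (z p true).
  by move=> p; rewrite /delta; have [_ -> _] := zspec p false; have [_ -> _] := zspec p true.
have Gz : forall p k (w : labeling V P), w (j,p) = k -> G0 p (z p k) <= G0 p w.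
  move=> p k w hw; have [_ _ h3] := zspec p k.
  have := h3 (mix (z p k) (pred1 p) (fun _ => w)).
  rewrite /Lo mix_L big_pred1_eq ffunE /= eqxx => /(_ hw).
  by rewrite lerDl subr_ge0.
have Rz : forall p k (w : labeling V P), Lo (z p k) <= Lo w + (G0 p (z p k) - G0 p w).
  move=> p k w; have [h1 _ h3] := zspec p k.
  have := h3 (mix w (pred1 p) (fun _ => z p k)).
  by rewrite /Lo mix_L big_pred1_eq ffunE /= eqxx => /(_ h1).
have dlo : forall p, G0 p (z p false) - G0 p (z p true) <= delta E theta C lam_old j p.
  move=> p; rewrite delta_eq; have := Rz p true (z p false); lra.
have dhi : forall p, delta E theta C lam_old j p <= G0 p (z p false) - G0 p (z p true).
  move=> p; rewrite delta_eq; have := Rz p false (z p true); lra.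
pose Ln := fun y : labeling V P => lagr E theta C y lam_new.
have [_ hD hmin] := minL_spec Ln (isT : predT (y_zero V P)).
set y := Order.arg_min _ _ _ in hD hmin.
rewrite /dualD hD.
have shift : forall (l : V -> R) (x : labeling V P), (forall i, i != j -> l i = lam_old i) ->
   lagr E theta C x l = Lo x + (l j - lam_old j) * (s x - 1).
  by move=> l x hl; rewrite (lagr_shift E theta C x hl).
suff [y' hy'] : exists y' : labeling V P, lagr E theta C y' lam <= Ln y.
  apply: le_trans _ hy'; exact: (@minL_le R V P _ predT _ y').
have Hn : Ln y = Lo y + Delta * (s y - 1).
  rewrite /Ln (shift _ _ hnew_i) hnew_j; congr (_ + _ * _); ring.
rewrite Hn; set t := lam j - lam_old j.
have sge0 : forall x : labeling V P, 0 <= s x by move=> x; apply: sumr_ge0 => p _; apply: ler0n.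
have [htD|htD] := lerP t Delta.
- case hy1 : (y (j,p1)).
    exists y; rewrite (shift _ _ Hlam) -/t.
    have s1 : 1 <= s y.
      rewrite /s (bigD1 p1) //= hy1 lerDl; apply: sumr_ge0 => p _; apply: ler0n.
    nra.
  pose y' := mix y (pred1 p1) (fun _ => z p1 true).
  exists y'; rewrite (shift _ _ Hlam) -/t /y' /Lo mix_L big_pred1_eq -/(Lo y).
  have sy' : s (mix y (pred1 p1) (fun _ => z p1 true)) = s y + 1.
    rewrite /s (bigD1 p1) //= [in RHS](bigD1 p1) //= !ffunE /= eqxx hy1.
    have [-> _ _] := zspec p1 true.
    rewrite add0r addrC; congr (_ + _); apply: eq_bigr => p hp.
    by rewrite ffunE /= (negbTE hp).
  rewrite sy'.
  have h1 := Gz p1 false y hy1.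
  have h2 := dhi p1.
  have h3 := sge0 y.
  rewrite -/G0; nra.
- pose A := fun q => y (j,q) && (q != p1).
  pose y' := mix y A (fun q => z q false).
  exists y'; rewrite (shift _ _ Hlam) -/t /y' /Lo mix_L -/(Lo y).
  set y'' := mix _ _ _.
  pose N := \sum_(q | A q) (1 : R).
  have hsum : \sum_(q | A q) (G0 q (z q false) - G0 q y) <= Delta * N.
    rewrite /N mulr_sumr; apply: ler_sum => q /andP [hq hq1]; rewrite mulr1.
    have := Gz q true y hq; have := dlo q; have := hD2 q hq1; rewrite -/G0; lra.
  have sN : s y = s y'' + N.
    rewrite /N big_mkcond /= /s -big_split /=; apply: eq_bigr => p _.
    rewrite /y'' ffunE /=; case hA : (A p).
      have [-> _ _] := zspec p false; move: hA; rewrite /A => /andP [-> _]; by rewrite add0r.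
    by rewrite addr0.
  have s1 : s y'' <= 1.
    rewrite /s (bigD1 p1) //= big1 ?addr0 ?lern1 ?leq_b1 //.
    move=> p hp; rewrite /y'' ffunE /= /A hp andbT.
    case hyp : (y (j,p)) => //; by have [-> _ _] := zspec p false.
  rewrite -/G0 sN; nra.
Qed.
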